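(* (1) Every congruence hyperextensible category $\mathbb E$ is crystallographic with respect to the structure of subtraction and with respect to the structure of (abelian) group: on every object of $\mathbb E$ there is at most one internal subtraction and at most one internal group structure. (2) If $\mathbb E$ is a Gumm category, then for every object $Y$, every object of the fiber $Pt_Y\mathbb E$ carries at most one internal group structure in $Pt_Y\mathbb E$.
   Context: A pointed finitely complete category $\mathbb E$ is congruence hyperextensible if for every commutative diagram of split epimorphisms $f:W\to X$ (section $s$), $g:W\to Y$ (section $t$) with $gs=0$, $ft=0$, and every equivalence relation $T$ on $W$ with $R[f]\cap R[g]\subseteq T$, one has $R[f]\cap g^{-1}(t^{-1}(T))\subseteq T$ ($R[f]$ the kernel equivalence relation of $f$). An internal subtraction on $X$ in a pointed category is $s:X\times X\to X$ with $s(x,x)=0$ and $s(x,0)=x$. A finitely complete category is a Gumm category if it satisfies the Shifting Lemma: for equivalence relations $R,S,T$ on an object with $R\cap S\subseteq T$, whenever (in generalized elements) $x\,S\,y$, $x'\,S\,y'$, $x\,R\,x'$, $y\,R\,y'$ and $x\,T\,x'$, then $y\,T\,y'$. $Pt_Y\mathbb E$ is the (pointed) category of split epimorphisms onto $Y$ with chosen sections. *)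

(* Defs.v *)
From Stdlib Require Import ProofIrrelevance.

Record Category := {
  ob :> Type;
  hom : ob -> ob -> Type;
  idm : forall A, hom A A;
  comp : forall A B C, hom B C -> hom A B -> hom A C;
  comp_assoc : forall A B C D (h : hom C D) (g : hom B C) (f : hom A B),
      comp A C D h (comp A B C g f) = comp A B D (comp B C D h g) f;
  comp_id_l : forall A B (f : hom A B), comp A B B (idm B) f = f;
  comp_id_r : forall A B (f : hom A B), comp A A B f (idm A) = f }.
Arguments hom {c} A B.
Arguments idm {c} A.
Arguments comp {c A B C} g f.
Arguments comp_assoc {c A B C D} h g f.
Arguments comp_id_l {c A B} f.
Arguments comp_id_r {c A B} f.
Infix "∘" := comp (at level 40, left associativity).

Record Cartesian (C : Category) := {
  term : C;
  bang : forall A : C, hom A term;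
  bang_uniq : forall A (f : hom A term), f = bang A;
  prod : C -> C -> C;
  pr1 : forall A B, hom (prod A B) A;
  pr2 : forall A B, hom (prod A B) B;
  pair : forall D A B, hom D A -> hom D B -> hom D (prod A B);
  pair1 : forall D A B (f : hom D A) (g : hom D B), pr1 A B ∘ pair D A B f g = f;
  pair2 : forall D A B (f : hom D A) (g : hom D B), pr2 A B ∘ pair D A B f g = g;
  pair_uniq : forall D A B (f : hom D A) (g : hom D B) (h : hom D (prod A B)),
      pr1 A B ∘ h = f -> pr2 A B ∘ h = g -> h = pair D A B f g }.
Arguments term {C} c.
Arguments bang {C} c A.
Arguments prod {C} c A B.
Arguments pr1 {C} c A B.
Arguments pr2 {C} c A B.
Arguments pair {C} c {D A B} f g.

Record Pullbacks (C : Category) := {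
  pb : forall A B Z : C, hom A Z -> hom B Z -> C;
  pb1 : forall A B Z (f : hom A Z) (g : hom B Z), hom (pb A B Z f g) A;
  pb2 : forall A B Z (f : hom A Z) (g : hom B Z), hom (pb A B Z f g) B;
  pb_comm : forall A B Z (f : hom A Z) (g : hom B Z), f ∘ pb1 A B Z f g = g ∘ pb2 A B Z f g;
  pbpair : forall D A B Z (f : hom A Z) (g : hom B Z) (h : hom D A) (k : hom D B),
      f ∘ h = g ∘ k -> hom D (pb A B Z f g);
  pbpair1 : forall D A B Z (f : hom A Z) (g : hom B Z) h k (H : f ∘ h = g ∘ k),
      pb1 A B Z f g ∘ pbpair D A B Z f g h k H = h;
  pbpair2 : forall D A B Z (f : hom A Z) (g : hom B Z) h k (H : f ∘ h = g ∘ k),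
      pb2 A B Z f g ∘ pbpair D A B Z f g h k H = k;
  pbpair_uniq : forall D A B Z (f : hom A Z) (g : hom B Z) h k (H : f ∘ h = g ∘ k)
      (u : hom D (pb A B Z f g)), pb1 A B Z f g ∘ u = h -> pb2 A B Z f g ∘ u = k ->
      u = pbpair D A B Z f g h k H }.
Arguments pb {C} c {A B Z} f g : rename.
Arguments pb1 {C} c {A B Z} f g : rename.
Arguments pb2 {C} c {A B Z} f g : rename.
Arguments pb_comm {C} c {A B Z} f g : rename.
Arguments pbpair {C} c {D A B Z f g h k} H : rename.
Arguments pbpair1 {C} c {D A B Z f g h k} H : rename.
Arguments pbpair2 {C} c {D A B Z f g h k} H : rename.
Arguments pbpair_uniq {C} c {D A B Z f g h k} H u _ _ : rename.

Record FinitelyComplete (C : Category) := {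
  fc_cart : Cartesian C;
  fc_pb : Pullbacks C }.
Arguments fc_cart {C} f : rename.
Arguments fc_pb {C} f : rename.

Record Pointed (C : Category) (K : Cartesian C) := {
  zin : forall B : C, hom (term K) B;
  zin_uniq : forall B (u : hom (term K) B), u = zin B }.
Arguments Pointed {C} K.
Arguments zin {C K} p B : rename.

Definition zero {C : Category} {K : Cartesian C} (P : Pointed K) (A B : C) : hom A B :=
  zin P B ∘ bang K A.

Record Relation (C : Category) (W : C) := {
  rel_ob : C;
  rel1 : hom rel_ob W;
  rel2 : hom rel_ob W;
  rel_jmono : forall A (u v : hom A rel_ob), rel1 ∘ u = rel1 ∘ v -> rel2 ∘ u = rel2 ∘ v -> u = v }.
Arguments Relation {C} W.
Arguments rel_ob {C W} r : rename.
Arguments rel1 {C W} r : rename.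
Arguments rel2 {C W} r : rename.

Definition rel_holds {C : Category} {W : C} (R : Relation W) {A : C} (x y : hom A W) : Prop :=
  exists u : hom A (rel_ob R), rel1 R ∘ u = x /\ rel2 R ∘ u = y.

Definition IsEquivalence {C : Category} {W : C} (R : Relation W) : Prop :=
  (forall A (x : hom A W), rel_holds R x x) /\
  (forall A (x y : hom A W), rel_holds R x y -> rel_holds R y x) /\
  (forall A (x y z : hom A W), rel_holds R x y -> rel_holds R y z -> rel_holds R x z).

(* Membership in R[f] is  f x = f y;  membership in g^{-1}(t^{-1}(T)) is
   (t g x) T (t g y); inclusion of relations is inclusion on generalized
   elements (intersection = conjunction). *)
Definition CongruenceHyperextensible {C : Category} (F : FinitelyComplete C)
    (P : Pointed (fc_cart F)) : Prop :=
  forall (W X Y : C) (f : hom W X) (s : hom X W) (g : hom W Y) (t : hom Y W),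
    f ∘ s = idm X -> g ∘ t = idm Y -> g ∘ s = zero P X Y -> f ∘ t = zero P Y X ->
    forall T : Relation W, IsEquivalence T ->
      (forall A (x y : hom A W), f ∘ x = f ∘ y -> g ∘ x = g ∘ y -> rel_holds T x y) ->
      (forall A (x y : hom A W), f ∘ x = f ∘ y ->
          rel_holds T (t ∘ g ∘ x) (t ∘ g ∘ y) -> rel_holds T x y).

Definition Gumm (C : Category) : Prop :=
  forall (W : C) (R S T : Relation W),
    IsEquivalence R -> IsEquivalence S -> IsEquivalence T ->
    (forall A (x y : hom A W), rel_holds R x y -> rel_holds S x y -> rel_holds T x y) ->
    forall A (x y x' y' : hom A W),
      rel_holds S x y -> rel_holds S x' y' -> rel_holds R x x' -> rel_holds R y y' ->
      rel_holds T x x' -> rel_holds T y y'.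

Definition IsSubtraction {C : Category} {K : Cartesian C} (P : Pointed K) (X : C)
    (s : hom (prod K X X) X) : Prop :=
  s ∘ pair K (idm X) (idm X) = zero P X X /\
  s ∘ pair K (idm X) (zero P X X) = idm X.

Record InternalGroup {C : Category} (K : Cartesian C) (X : C) := {
  grp_mul : hom (prod K X X) X;
  grp_unit : hom (term K) X;
  grp_inv : hom X X;
  grp_assoc : forall A (a b c : hom A X),
      grp_mul ∘ pair K (grp_mul ∘ pair K a b) c = grp_mul ∘ pair K a (grp_mul ∘ pair K b c);
  grp_unit_l : forall A (a : hom A X), grp_mul ∘ pair K (grp_unit ∘ bang K A) a = a;
  grp_unit_r : forall A (a : hom A X), grp_mul ∘ pair K a (grp_unit ∘ bang K A) = a;
  grp_inv_l : forall A (a : hom A X), grp_mul ∘ pair K (grp_inv ∘ a) a = grp_unit ∘ bang K A;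
  grp_inv_r : forall A (a : hom A X), grp_mul ∘ pair K a (grp_inv ∘ a) = grp_unit ∘ bang K A }.
Arguments grp_mul {C K X} g : rename.
Arguments grp_unit {C K X} g : rename.
Arguments grp_inv {C K X} g : rename.

Definition same_group {C : Category} {K : Cartesian C} {X : C} (G1 G2 : InternalGroup K X) : Prop :=
  grp_mul G1 = grp_mul G2 /\ grp_unit G1 = grp_unit G2 /\ grp_inv G1 = grp_inv G2.

Lemma sig_eq_ext (T : Type) (Pr : T -> Prop) (x y : sig Pr) :
  proj1_sig x = proj1_sig y -> x = y.
Proof.
  destruct x as [x hx], y as [y hy]; simpl; intros ->.
  f_equal; apply proof_irrelevance.
Qed.

Section Fibre.
Variable E : Category.
Variable Y : E.

Record PtObj := {
  pt_ob : E;
  pt_p : hom pt_ob Y;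
  pt_s : hom Y pt_ob;
  pt_ps : pt_p ∘ pt_s = idm Y }.

Definition PtHom (A B : PtObj) : Type :=
  { f : hom (pt_ob A) (pt_ob B) | pt_p B ∘ f = pt_p A /\ f ∘ pt_s A = pt_s B }.

Definition pt_id (A : PtObj) : PtHom A A.
Proof.
  exists (idm _); split; [apply comp_id_r | apply comp_id_l].
Defined.

Definition pt_comp (A B D : PtObj) (g : PtHom B D) (f : PtHom A B) : PtHom A D.
Proof.
  exists (proj1_sig g ∘ proj1_sig f).
  destruct g as [g [g1 g2]], f as [f [f1 f2]]; simpl; split.
  - rewrite comp_assoc, g1; exact f1.
  - rewrite <- comp_assoc, f2; exact g2.
Defined.

Definition PtCat : Category.
Proof.
  refine {| ob := PtObj; hom := PtHom; idm := pt_id; comp := pt_comp |};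
    intros; apply sig_eq_ext; simpl.
  - apply comp_assoc.
  - apply comp_id_l.
  - apply comp_id_r.
Defined.

Variable PB : Pullbacks E.

Definition pt_term : PtObj := {| pt_ob := Y; pt_p := idm Y; pt_s := idm Y; pt_ps := comp_id_l _ |}.

Definition pt_bang (A : PtObj) : PtHom A pt_term.
Proof.
  exists (pt_p A); simpl; split; [apply comp_id_l | apply pt_ps].
Defined.

Lemma pt_bang_uniq (A : PtObj) (f : PtHom A pt_term) : f = pt_bang A.
Proof.
  apply sig_eq_ext; destruct f as [f [f1 f2]]; simpl in *.
  rewrite <- f1; symmetry; apply comp_id_l.
Qed.

Lemma pt_sec_eq (A B : PtObj) : pt_p A ∘ pt_s A = pt_p B ∘ pt_s B.
Proof. rewrite !pt_ps; reflexivity. Qed.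

Definition pt_prod_s (A B : PtObj) : hom Y (pb PB (pt_p A) (pt_p B)) :=
  pbpair PB (pt_sec_eq A B).

Lemma pt_prod_ps (A B : PtObj) :
  (pt_p A ∘ pb1 PB (pt_p A) (pt_p B)) ∘ pt_prod_s A B = idm Y.
Proof.
  unfold pt_prod_s; rewrite <- comp_assoc, pbpair1; apply pt_ps.
Qed.

Definition pt_prod (A B : PtObj) : PtObj :=
  {| pt_ob := pb PB (pt_p A) (pt_p B);
     pt_p := pt_p A ∘ pb1 PB (pt_p A) (pt_p B);
     pt_s := pt_prod_s A B;
     pt_ps := pt_prod_ps A B |}.

Definition pt_pr1 (A B : PtObj) : PtHom (pt_prod A B) A.
Proof.
  exists (pb1 PB (pt_p A) (pt_p B)); simpl; split; [reflexivity | apply pbpair1].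
Defined.

Definition pt_pr2 (A B : PtObj) : PtHom (pt_prod A B) B.
Proof.
  exists (pb2 PB (pt_p A) (pt_p B)); simpl; split.
  - symmetry; apply pb_comm.
  - apply pbpair2.
Defined.

Lemma pt_pair_eq {D A B : PtObj} (f : PtHom D A) (g : PtHom D B) :
  pt_p A ∘ proj1_sig f = pt_p B ∘ proj1_sig g.
Proof.
  destruct f as [f [f1 f2]], g as [g [g1 g2]]; simpl; rewrite f1, g1; reflexivity.
Qed.

Definition pt_pair (D A B : PtObj) (f : PtHom D A) (g : PtHom D B) : PtHom D (pt_prod A B).
Proof.
  exists (pbpair PB (pt_pair_eq f g)); simpl; split.
  - rewrite <- comp_assoc, pbpair1; destruct f as [f [f1 f2]]; exact f1.
  - unfold pt_prod_s; apply pbpair_uniq.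
    + rewrite comp_assoc, pbpair1; destruct f as [f [f1 f2]]; exact f2.
    + rewrite comp_assoc, pbpair2; destruct g as [g [g1 g2]]; exact g2.
Defined.

Definition PtCart : Cartesian PtCat.
Proof.
  refine {| term := (pt_term : PtCat); bang := pt_bang; bang_uniq := pt_bang_uniq;
            prod := pt_prod; pr1 := pt_pr1; pr2 := pt_pr2; pair := pt_pair |};
    intros; try apply sig_eq_ext; simpl.
  - apply pbpair1.
  - apply pbpair2.
  - apply pbpair_uniq; [rewrite <- H | rewrite <- H0]; reflexivity.
Defined.

End Fibre.
Arguments PtObj {E} Y.

(* Main.v *)
Require Import Defs.
From Stdlib Require Import Setoid ProofIrrelevance.

Section Gen.
Context {C : Category} (K : Cartesian C).

Lemma pair_comp {D D' A B : C} (f : hom D A) (g : hom D B) (h : hom D' D) :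
  pair K f g ∘ h = pair K (f ∘ h) (g ∘ h).
Proof.
  apply pair_uniq; rewrite comp_assoc; [rewrite pair1 | rewrite pair2]; reflexivity.
Qed.

Lemma pair_eta {D A B : C} (h : hom D (prod K A B)) : h = pair K (pr1 K A B ∘ h) (pr2 K A B ∘ h).
Proof. apply pair_uniq; reflexivity. Qed.

Lemma pair_pr (A B : C) : pair K (pr1 K A B) (pr2 K A B) = idm _.
Proof. symmetry; apply pair_uniq; apply comp_id_r. Qed.

Variable X : C.
Variable G : InternalGroup K X.

Definition sigma : hom (prod K X X) X :=
  grp_mul G ∘ pair K (pr1 K X X) (grp_inv G ∘ pr2 K X X).

Lemma sigma_pair {D : C} (a b : hom D X) :
  sigma ∘ pair K a b = grp_mul G ∘ pair K a (grp_inv G ∘ b).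
Proof.
  unfold sigma. rewrite <- comp_assoc, pair_comp, pair1, <- comp_assoc, pair2. reflexivity.
Qed.

Lemma inv_unit : grp_inv G ∘ grp_unit G = grp_unit G.
Proof.
  pose proof (grp_inv_l _ _ G _ (grp_unit G)) as H1.
  pose proof (grp_unit_r _ _ G _ (grp_inv G ∘ grp_unit G)) as H2.
  rewrite <- (bang_uniq _ K _ (idm _)) in H1, H2.
  rewrite comp_id_r in H1, H2. congruence.
Qed.

Lemma inv_inv {D : C} (a : hom D X) : grp_inv G ∘ (grp_inv G ∘ a) = a.
Proof.
  rewrite <- (grp_unit_r _ _ G _ (grp_inv G ∘ (grp_inv G ∘ a))).
  rewrite <- (grp_inv_l _ _ G _ a), <- grp_assoc, grp_inv_l, grp_unit_l. reflexivity.
Qed.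

Lemma sig_aa {D : C} (a : hom D X) : sigma ∘ pair K a a = grp_unit G ∘ bang K D.
Proof. rewrite sigma_pair. apply grp_inv_r. Qed.

Lemma sig_a0 {D : C} (a : hom D X) : sigma ∘ pair K a (grp_unit G ∘ bang K D) = a.
Proof. rewrite sigma_pair, comp_assoc, inv_unit. apply grp_unit_r. Qed.

Lemma inv_from_sigma : grp_inv G = sigma ∘ pair K (grp_unit G ∘ bang K X) (idm X).
Proof. rewrite sigma_pair, comp_id_r, grp_unit_l. reflexivity. Qed.

Lemma mul_from_sigma : grp_mul G = sigma ∘ pair K (pr1 K X X) (grp_inv G ∘ pr2 K X X).
Proof. rewrite sigma_pair, inv_inv, pair_pr, comp_id_r. reflexivity. Qed.
End Gen.

Lemma recover {C : Category} (K : Cartesian C) (X : C) (G1 G2 : InternalGroup K X) :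
  grp_unit G1 = grp_unit G2 -> sigma K X G1 = sigma K X G2 -> same_group G1 G2.
Proof.
  intros Hu Hs.
  assert (Hi : grp_inv G1 = grp_inv G2).
  { rewrite (inv_from_sigma K X G1), (inv_from_sigma K X G2), Hs, Hu. reflexivity. }
  split; [| split]; auto.
  rewrite (mul_from_sigma K X G1), (mul_from_sigma K X G2), Hs, Hi. reflexivity.
Qed.

Definition KR {C : Category} (PB : Pullbacks C) {W Z : C} (phi : hom W Z) : Relation W.
Proof.
  refine {| rel_ob := pb PB phi phi; rel1 := pb1 PB phi phi; rel2 := pb2 PB phi phi |}.
  intros A u v H1 H2.
  assert (E : phi ∘ (pb1 PB phi phi ∘ u) = phi ∘ (pb2 PB phi phi ∘ u)).
  { rewrite !comp_assoc, pb_comm. reflexivity. }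
  rewrite (pbpair_uniq PB E u eq_refl eq_refl).
  symmetry; apply pbpair_uniq; auto.
Defined.

Lemma KR_iff {C : Category} (PB : Pullbacks C) {W Z : C} (phi : hom W Z) {A} (x y : hom A W) :
  rel_holds (KR PB phi) x y <-> phi ∘ x = phi ∘ y.
Proof.
  split.
  - intros [u [H1 H2]]; simpl in *; subst. rewrite !comp_assoc, pb_comm; reflexivity.
  - intros H. exists (pbpair PB H); simpl; split; [apply pbpair1 | apply pbpair2].
Qed.

Lemma KR_equiv {C : Category} (PB : Pullbacks C) {W Z : C} (phi : hom W Z) :
  IsEquivalence (KR PB phi).
Proof.
  split; [| split]; intros.
  - apply KR_iff; reflexivity.
  - apply KR_iff; apply KR_iff in H; congruence.
  - apply KR_iff; apply KR_iff in H; apply KR_iff in H0; congruence.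
Qed.

Section P1.
Context {E : Category} (F : FinitelyComplete E) (P : Pointed (fc_cart F)).
Local Notation K := (fc_cart F).

Lemma zero_comp {D A B : E} (h : hom D A) : zero P A B ∘ h = zero P D B.
Proof. unfold zero. rewrite <- comp_assoc, (bang_uniq _ K _ (bang K A ∘ h)). reflexivity. Qed.

Lemma comp_zero {A B B' : E} (h : hom B B') : h ∘ zero P A B = zero P A B'.
Proof. unfold zero. rewrite comp_assoc, (zin_uniq _ _ P _ (h ∘ zin P B)). reflexivity. Qed.

Variable X : E.

Lemma sub_aa (s : hom (prod K X X) X) : IsSubtraction P X s ->
  forall D (a : hom D X), s ∘ pair K a a = zero P D X.
Proof.
  intros [H1 H2] D a.
  replace (pair K a a) with (pair K (idm X) (idm X) ∘ a)
    by (rewrite pair_comp, comp_id_l; reflexivity).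
  rewrite comp_assoc, H1; apply zero_comp.
Qed.

Lemma sub_a0 (s : hom (prod K X X) X) : IsSubtraction P X s ->
  forall D (a : hom D X), s ∘ pair K a (zero P D X) = a.
Proof.
  intros [H1 H2] D a.
  replace (pair K a (zero P D X)) with (pair K (idm X) (zero P X X) ∘ a)
    by (rewrite pair_comp, comp_id_l, zero_comp; reflexivity).
  rewrite comp_assoc, H2; apply comp_id_l.
Qed.

Lemma key1 (HC : CongruenceHyperextensible F P) (s1 s2 : hom (prod K X X) X) :
  IsSubtraction P X s1 -> IsSubtraction P X s2 ->
  forall D (a b : hom D X), s1 ∘ pair K a (s2 ∘ pair K a b) = b.
Proof.
  intros S1 S2 D a b.
  set (phi := s1 ∘ pair K (pr1 K X X) s2).
  assert (Hphi : forall (u v : hom D X), phi ∘ pair K u v = s1 ∘ pair K u (s2 ∘ pair K u v)).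
  { intros u v; unfold phi. rewrite <- comp_assoc, pair_comp, pair1. reflexivity. }
  assert (HT := HC (prod K X X) X X (pr2 K X X) (pair K (zero P X X) (idm X))
     (pr1 K X X) (pair K (idm X) (zero P X X))
     ltac:(apply pair2) ltac:(apply pair1) ltac:(apply pair1) ltac:(apply pair2)
     (KR (fc_pb F) phi) (KR_equiv _ phi)).
  assert (Hdiag : forall A (x y : hom A (prod K X X)), pr2 K X X ∘ x = pr2 K X X ∘ y ->
       pr1 K X X ∘ x = pr1 K X X ∘ y -> rel_holds (KR (fc_pb F) phi) x y).
  { intros A x y H2 H1. apply KR_iff. rewrite (pair_eta K x), (pair_eta K y), H1, H2.
    reflexivity. }
  specialize (HT Hdiag D (pair K a b) (pair K b b)).
  rewrite !pair2 in HT. specialize (HT eq_refl).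
  rewrite !KR_iff in HT.
  rewrite !Hphi in HT.
  rewrite sub_aa, sub_a0 in HT by assumption.
  apply HT.
  rewrite <- !comp_assoc, !pair1, !pair_comp, !comp_id_l, !zero_comp, !Hphi.
  rewrite !sub_a0, !sub_aa by assumption. reflexivity.
Qed.

Lemma sub_unique (HC : CongruenceHyperextensible F P) (s1 s2 : hom (prod K X X) X) :
  IsSubtraction P X s1 -> IsSubtraction P X s2 -> s1 = s2.
Proof.
  intros S1 S2.
  assert (forall D (a b : hom D X), s2 ∘ pair K a b = s1 ∘ pair K a b).
  { intros D a b. rewrite <- (key1 HC s1 s1 S1 S1 D a (s2 ∘ pair K a b)).
    rewrite (key1 HC s1 s2 S1 S2). reflexivity. }
  rewrite <- (comp_id_r s1), <- (comp_id_r s2), <- pair_pr. symmetry; apply H.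
Qed.

Lemma sigma_sub (G : InternalGroup K X) : IsSubtraction P X (sigma K X G).
Proof.
  assert (Hz : grp_unit G ∘ bang K X = zero P X X).
  { unfold zero. rewrite (zin_uniq _ _ P _ (grp_unit G)). reflexivity. }
  split.
  - rewrite sig_aa, Hz. reflexivity.
  - rewrite <- Hz. apply sig_a0.
Qed.

Lemma grp_unique (HC : CongruenceHyperextensible F P) (G1 G2 : InternalGroup K X) :
  same_group G1 G2.
Proof.
  apply recover.
  - rewrite (zin_uniq _ _ P _ (grp_unit G1)), (zin_uniq _ _ P _ (grp_unit G2)). reflexivity.
  - apply sub_unique; auto; apply sigma_sub.
Qed.
End P1.

Section PB.
Context {E : Category} (PB : Pullbacks E).

Lemma pp_ext {D A B Z : E} (f : hom A Z) (g : hom B Z) (h1 h2 : hom D A) (k1 k2 : hom D B)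
  (H1 : f ∘ h1 = g ∘ k1) (H2 : f ∘ h2 = g ∘ k2) : h1 = h2 -> k1 = k2 ->
  pbpair PB H1 = pbpair PB H2.
Proof. intros -> ->. f_equal; apply proof_irrelevance. Qed.

Lemma pp_comp {D D' A B Z : E} (f : hom A Z) (g : hom B Z) (h : hom D A) (k : hom D B)
  (H : f ∘ h = g ∘ k) (u : hom D' D) (H' : f ∘ (h ∘ u) = g ∘ (k ∘ u)) :
  pbpair PB H ∘ u = pbpair PB H'.
Proof. apply pbpair_uniq; rewrite comp_assoc; [rewrite pbpair1 | rewrite pbpair2]; reflexivity. Qed.

Lemma pp_eta {D A B Z : E} (f : hom A Z) (g : hom B Z) (x y : hom D (pb PB f g)) :
  pb1 PB f g ∘ x = pb1 PB f g ∘ y -> pb2 PB f g ∘ x = pb2 PB f g ∘ y -> x = y.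
Proof.
  intros H1 H2.
  assert (E1 : f ∘ (pb1 PB f g ∘ x) = g ∘ (pb2 PB f g ∘ x)) by (rewrite !comp_assoc, pb_comm; reflexivity).
  rewrite (pbpair_uniq PB E1 x eq_refl eq_refl).
  symmetry; apply pbpair_uniq; auto.
Qed.

Variables (Y A : E) (p : hom A Y) (e : hom Y A) (pe : p ∘ e = idm Y).
Local Notation W := (pb PB p p).
Local Notation q1 := (pb1 PB p p).
Local Notation q2 := (pb2 PB p p).

Definition goodsig (s : hom W A) : Prop :=
  p ∘ s = p ∘ q1 /\
  (forall H : p ∘ idm A = p ∘ idm A, s ∘ pbpair PB H = e ∘ p) /\
  (forall H : p ∘ idm A = p ∘ (e ∘ p), s ∘ pbpair PB H = idm A).

Lemma gs1 s : goodsig s -> forall D (a c : hom D A) (H : p ∘ a = p ∘ c), c = a ->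
  s ∘ pbpair PB H = e ∘ p ∘ a.
Proof.
  intros [_ [G1 _]] D a c H ->.
  assert (H0 : p ∘ idm A = p ∘ idm A) by reflexivity.
  assert (H' : p ∘ (idm A ∘ a) = p ∘ (idm A ∘ a)) by reflexivity.
  rewrite (pp_ext _ _ _ (idm A ∘ a) _ (idm A ∘ a) H H') by (rewrite comp_id_l; reflexivity).
  rewrite <- (pp_comp _ _ _ _ H0 a H'), comp_assoc, G1. reflexivity.
Qed.

Lemma gs2 s : goodsig s -> forall D (a c : hom D A) (H : p ∘ a = p ∘ c), c = e ∘ p ∘ a ->
  s ∘ pbpair PB H = a.
Proof.
  intros [_ [_ G2]] D a c H ->.
  assert (H0 : p ∘ idm A = p ∘ (e ∘ p)) by (rewrite (comp_assoc p e p), pe, comp_id_l, comp_id_r; reflexivity).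
  assert (H' : p ∘ (idm A ∘ a) = p ∘ ((e ∘ p) ∘ a)) by (rewrite comp_id_l, !comp_assoc, pe, comp_id_l; reflexivity).
  rewrite (pp_ext _ _ _ (idm A ∘ a) _ (e ∘ p ∘ a) H H') by (rewrite ?comp_id_l; reflexivity).
  rewrite <- (pp_comp _ _ _ _ H0 a H'), comp_assoc, G2. apply comp_id_l.
Qed.

Lemma key2 (HG : Gumm E) sj sk : goodsig sj -> goodsig sk ->
  forall D (a b : hom D A) (Hab : p ∘ a = p ∘ b) (H : p ∘ a = p ∘ (sk ∘ pbpair PB Hab)),
  sj ∘ pbpair PB H = b.
Proof.
  intros Gj Gk D a b Hab H.
  assert (Hphi : p ∘ q1 = p ∘ sk) by (symmetry; apply Gk).
  set (phi := sj ∘ pbpair PB Hphi).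
  assert (Phi : forall (u v : hom D A) (Huv : p ∘ u = p ∘ v) (H' : p ∘ u = p ∘ (sk ∘ pbpair PB Huv)),
    phi ∘ pbpair PB Huv = sj ∘ pbpair PB H').
  { intros u v Huv H'. unfold phi. rewrite <- comp_assoc. f_equal.
    assert (H2 : p ∘ (q1 ∘ pbpair PB Huv) = p ∘ (sk ∘ pbpair PB Huv))
      by (rewrite pbpair1; exact H').
    rewrite (pp_comp _ _ _ _ Hphi _ H2). apply pp_ext; [apply pbpair1 | reflexivity]. }
  assert (Hx : p ∘ a = p ∘ (e ∘ p ∘ a)) by (rewrite !comp_assoc, pe, comp_id_l; reflexivity).
  assert (Hx' : p ∘ b = p ∘ (e ∘ p ∘ b)) by (rewrite !comp_assoc, pe, comp_id_l; reflexivity).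
  assert (Hbb : p ∘ b = p ∘ b) by reflexivity.
  pose proof (HG W (KR PB q2) (KR PB q1) (KR PB phi) (KR_equiv _ _) (KR_equiv _ _) (KR_equiv _ _))
    as HS.
  assert (Hsub : forall A0 (x y : hom A0 W), rel_holds (KR PB q2) x y -> rel_holds (KR PB q1) x y ->
     rel_holds (KR PB phi) x y).
  { intros A0 x y R1 R2. rewrite KR_iff in *. rewrite (pp_eta _ _ x y R2 R1). reflexivity. }
  specialize (HS Hsub D (pbpair PB Hx) (pbpair PB Hab) (pbpair PB Hx') (pbpair PB Hbb)).
  rewrite !KR_iff, !pbpair1, !pbpair2 in HS.
  assert (Hpp : e ∘ p ∘ a = e ∘ p ∘ b) by (rewrite <- !comp_assoc, Hab; reflexivity).
  specialize (HS eq_refl eq_refl Hpp eq_refl).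
  assert (Ex : forall (u : hom D A) (Hu : p ∘ u = p ∘ (e ∘ p ∘ u)), phi ∘ pbpair PB Hu = e ∘ p ∘ u).
  { intros u Hu.
    assert (Hu2 : p ∘ u = p ∘ (sk ∘ pbpair PB Hu)) by (rewrite (gs2 sk Gk _ _ _ Hu eq_refl); reflexivity).
    rewrite (Phi _ _ _ Hu2). apply (gs1 sj Gj). apply (gs2 sk Gk). reflexivity. }
  rewrite !Ex in HS. specialize (HS Hpp).
  rewrite (Phi _ _ _ H) in HS. rewrite HS.
  assert (Hb2 : p ∘ b = p ∘ (sk ∘ pbpair PB Hbb)) by (rewrite (gs1 sk Gk _ _ _ Hbb eq_refl), !comp_assoc, pe, comp_id_l; reflexivity).
  rewrite (Phi _ _ _ Hb2). apply (gs2 sj Gj). apply (gs1 sk Gk). reflexivity.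
Qed.

Lemma sig_unique2 (HG : Gumm E) s1 s2 : goodsig s1 -> goodsig s2 -> s1 = s2.
Proof.
  intros G1 G2.
  assert (Hq : p ∘ q1 = p ∘ q2) by apply pb_comm.
  assert (Hid : pbpair PB Hq = idm W) by (symmetry; apply pbpair_uniq; apply comp_id_r).
  rewrite <- (comp_id_r s1), <- (comp_id_r s2), <- Hid.
  set (c := s2 ∘ pbpair PB Hq).
  assert (Hc : p ∘ q1 = p ∘ c) by (unfold c; rewrite comp_assoc, (proj1 G2), <- comp_assoc, pbpair1; reflexivity).
  assert (K2 : s1 ∘ pbpair PB Hc = q2) by apply (key2 HG s1 s2 G1 G2 _ q1 q2 Hq Hc).
  assert (Hc2 : p ∘ q1 = p ∘ (s1 ∘ pbpair PB Hc)) by (rewrite K2; exact Hq).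
  rewrite <- (key2 HG s1 s1 G1 G1 _ q1 c Hc Hc2).
  f_equal. apply pp_ext; [reflexivity | symmetry; exact K2].
Qed.
End PB.

Section P3.
Context {E : Category} (F : FinitelyComplete E) (Y : E) (A : PtCat E Y).
Local Notation KP := (PtCart E Y (fc_pb F)).

Lemma unit_e (G : InternalGroup KP A) : proj1_sig (grp_unit G) = pt_s E Y A.
Proof.
  pose proof (proj2_sig (grp_unit G)) as [_ Hu]. simpl in Hu. rewrite comp_id_r in Hu. exact Hu.
Qed.

Lemma pcomp {A1 A2 A3 : PtCat E Y} (g : hom A2 A3) (f : hom A1 A2) :
  proj1_sig (g ∘ f) = proj1_sig g ∘ proj1_sig f.
Proof. reflexivity. Qed.
Lemma pid (B : PtCat E Y) : proj1_sig (idm B) = idm (pt_ob E Y B).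
Proof. reflexivity. Qed.
Lemma pbang (B : PtCat E Y) : proj1_sig (bang KP B) = pt_p E Y B.
Proof. reflexivity. Qed.
Lemma ppair {D B1 B2 : PtCat E Y} (f : hom D B1) (g : hom D B2) :
  proj1_sig (pair KP f g) = pbpair (fc_pb F) (pt_pair_eq E Y f g).
Proof. reflexivity. Qed.

Lemma good (G : InternalGroup KP A) :
  goodsig (fc_pb F) Y (pt_ob E Y A) (pt_p E Y A) (pt_s E Y A) (proj1_sig (sigma KP A G)).
Proof.
  split; [| split].
  - pose proof (proj2_sig (sigma KP A G)) as [Hs _]. simpl in Hs. exact Hs.
  - intros H.
    assert (Ha : proj1_sig (sigma KP A G) ∘ pbpair (fc_pb F) (pt_pair_eq E Y (idm (A : PtCat E Y)) (idm (A : PtCat E Y)))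
       = proj1_sig (grp_unit G) ∘ pt_p E Y A)
      by exact (f_equal (@proj1_sig _ _) (sig_aa KP A G (idm A))).
    rewrite unit_e in Ha. etransitivity; [|exact Ha]. f_equal. apply pp_ext; reflexivity.
  - intros H.
    assert (Ha : proj1_sig (sigma KP A G) ∘ pbpair (fc_pb F) (pt_pair_eq E Y (idm (A : PtCat E Y)) (grp_unit G ∘ bang KP A))
       = idm _)
      by exact (f_equal (@proj1_sig _ _) (sig_a0 KP A G (idm A))).
    etransitivity; [|exact Ha]. f_equal. apply pp_ext; [reflexivity|]. 
    change (pt_s E Y A ∘ pt_p E Y A = proj1_sig (grp_unit G) ∘ pt_p E Y A).
    rewrite unit_e. reflexivity.
Qed.

Lemma grp_unique2 (HG : Gumm E) (G1 G2 : InternalGroup KP A) : same_group G1 G2.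
Proof.
  apply recover.
  - apply sig_eq_ext. rewrite !unit_e. reflexivity.
  - apply sig_eq_ext. eapply sig_unique2; [apply (pt_ps E Y A) | exact HG | apply good | apply good].
Qed.
End P3.

Theorem mainTheorem10 :
  (* (1) congruence hyperextensible => crystallographic w.r.t. subtraction and groups *)
  (forall (E : Category) (F : FinitelyComplete E) (P : Pointed (fc_cart F)),
     CongruenceHyperextensible F P ->
     (forall (X : E) (s1 s2 : hom (prod (fc_cart F) X X) X),
        IsSubtraction P X s1 -> IsSubtraction P X s2 -> s1 = s2) /\
     (forall (X : E) (G1 G2 : InternalGroup (fc_cart F) X), same_group G1 G2)) /\
  (* (2) Gumm => every object of every fibre Pt_Y E has at most one internal group structure *)
  (forall (E : Category) (F : FinitelyComplete E),
     Gumm E ->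
     forall (Y : E) (A : PtCat E Y)
       (G1 G2 : InternalGroup (PtCart E Y (fc_pb F)) A), same_group G1 G2).
Proof.
  split.
  - intros E F P HC. split.
    + intros X s1 s2. apply (sub_unique F P X HC).
    + intros X G1 G2. apply (grp_unique F P X HC).
  - intros E F HG Y A G1 G2. apply grp_unique2; exact HG.
Qed.
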